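(* Let $\mu$ be an admissible measure on $\mathbb R$ and $m:=\mu(\mathbb R)$. Then \[ 1-m\le T(\mu)\le\sqrt{1-m^2}, \] where $T(\mu):=\frac12\int_{\mathbb R}|e^x-e^{-x}|\,\mu(dx)$.
   Context: A finitely supported positive measure $\mu$ on $\mathbb R$ is called admissible if $\int e^x\,\mu(dx)=\int e^{-x}\,\mu(dx)=1$. *)

(* Defs.v *)
From Stdlib Require Import Reals List.
Open Scope R_scope.

(* A finitely supported positive measure on R, represented as a finite list
   of atoms (x, w) meaning  mu = sum_i w_i * delta_{x_i}  with w_i > 0.
   (Repeated support points are allowed; they simply add up.) *)
Definition fmeasure := list (R * R).

Definition positive_fm (mu : fmeasure) : Prop :=
  Forall (fun p => 0 < snd p) mu.

Definition fm_int (f : R -> R) (mu : fmeasure) : R :=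
  fold_right (fun p acc => snd p * f (fst p) + acc) 0 mu.

Definition fm_mass (mu : fmeasure) : R := fm_int (fun _ => 1) mu.

Definition admissible (mu : fmeasure) : Prop :=
  positive_fm mu /\ fm_int exp mu = 1 /\ fm_int (fun x => exp (- x)) mu = 1.

Definition T (mu : fmeasure) : R :=
  / 2 * fm_int (fun x => Rabs (exp x - exp (- x))) mu.

(* Main.v *)
Require Import Defs.
From Stdlib Require Import Reals List Lra Psatz.
Open Scope R_scope.

Lemma key (mu : fmeasure) : positive_fm mu ->
  let M := fm_mass mu in
  let S := fm_int (fun x => Rabs (exp x - exp (- x))) mu in
  let A := fm_int exp mu in
  let B := fm_int (fun x => exp (- x)) mu in
  0 <= M /\ 0 <= S /\ 0 <= A + B /\ (2*M)^2 + S^2 <= (A+B)^2 /\ A + B - 2*M <= S.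
Proof.
  induction mu as [|[x w] mu IH]; intros Hp; simpl.
  - unfold fm_mass; simpl; lra.
  - inversion Hp as [|? ? Hw Hr]; subst. simpl in Hw.
    destruct (IH Hr) as [H1 [H2 [H3 [H4 H5]]]].
    unfold fm_mass in *; simpl.
    set (M := fm_int (fun _ => 1) mu) in *.
    set (S := fm_int (fun x => Rabs (exp x - exp (- x))) mu) in *.
    set (A := fm_int exp mu) in *.
    set (B := fm_int (fun x => exp (- x)) mu) in *.
    set (u := exp x). set (v := exp (- x)).
    assert (Hu : 0 < u) by apply exp_pos.
    assert (Hv : 0 < v) by apply exp_pos.
    assert (Huv : u * v = 1) by (unfold u, v; rewrite <- exp_plus; replace (x + - x) with 0 by ring; apply exp_0).
    set (s := Rabs (u - v)).
    assert (Hs0 : 0 <= s) by apply Rabs_pos.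
    assert (Hs2 : s^2 = (u - v)^2) by (unfold s; rewrite <- Rsqr_pow2, <- Rsqr_abs; apply Rsqr_pow2).
    assert (Hsl : u + v - 2 <= s).
    { unfold s; destruct (Rle_dec v u).
      - rewrite Rabs_right by lra. nra.
      - rewrite Rabs_left1 by lra. nra. }
    set (a := 2 * w). set (b := w * s). set (c := w * (u + v)).
    assert (Ha : 0 <= a) by (unfold a; lra).
    assert (Hb : 0 <= b) by (unfold b; nra).
    assert (Hc : 0 <= c) by (unfold c; nra).
    assert (Hatom : a^2 + b^2 = c^2).
    { unfold a, b, c. replace ((w * s)^2) with (w^2 * s^2) by ring. rewrite Hs2. nra. }
    assert (Hcs : a * (2*M) + b * S <= c * (A + B)).
    { assert (Hsq : (a * (2*M) + b * S)^2 <= (c * (A+B))^2).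
      { assert ((a * (2*M) + b * S)^2 <= (a^2+b^2)*((2*M)^2+S^2)).
        { assert (0 <= (a*S - b*(2*M))^2) by apply pow2_ge_0.
          replace ((a^2+b^2)*((2*M)^2+S^2)) with ((a * (2*M) + b * S)^2 + (a*S - b*(2*M))^2) by ring. lra. }
        rewrite Hatom in H. replace ((c*(A+B))^2) with (c^2*(A+B)^2) by ring.
        assert (c^2 * ((2*M)^2+S^2) <= c^2 * (A+B)^2) by (apply Rmult_le_compat_l; nra).
        lra. }
      assert (0 <= c * (A+B)) by nra.
      destruct (Rle_dec (a * (2*M) + b * S) 0); [nra|].
      nra. }
    repeat split.
    + lra.
    + unfold s in b; nra.
    + nra.
    + assert (Hfin : (2*(w*1+M))^2 + (b+S)^2 <= (w*u+A+(w*v+B))^2).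
      { replace ((2 * (w*1 + M))^2 + (b + S)^2) with (a^2 + b^2 + 2*(a*(2*M) + b*S) + ((2*M)^2 + S^2)) by (unfold a; ring).
        replace ((w * u + A + (w * v + B))^2) with (c^2 + 2*(c*(A+B)) + (A+B)^2) by (unfold c; ring).
        lra. }
      simpl in Hfin. exact Hfin.
    + assert (w*(u+v-2) <= b) by (unfold b; apply Rmult_le_compat_l; lra).
      nra.
Qed.

Theorem lemma6 (mu : fmeasure) :
  admissible mu ->
  1 - fm_mass mu <= T mu /\ T mu <= sqrt (1 - fm_mass mu ^ 2).
Proof.
  intros [Hp [HA HB]].
  destruct (key mu Hp) as [H1 [H2 [H3 [H4 H5]]]].
  rewrite HA, HB in *. unfold T.
  set (M := fm_mass mu) in *.
  set (S := fm_int (fun x => Rabs (exp x - exp (- x))) mu) in *.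
  split.
  - lra.
  - rewrite <- (sqrt_pow2 (/2 * S)) by lra.
    apply sqrt_le_1_alt. nra.
Qed.
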